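(* Let $\ell,\hat\ell:\mathbb{R}^q\times\mathbb{R}^q\to(0,1)$ with $\hat\ell$ continuous and $\hat\ell(x,\xi)\ge\ell(x,\xi)$ for all $x,\xi\in\mathbb{R}^q$. Let $s\in\mathbb{R}^q$, $\xi_1,\dots,\xi_n\in\mathbb{R}^q$, and for functions $a,b:\mathbb{R}^q\times\mathbb{R}^q\to(0,1)$ and $x\in\mathbb{R}^q$ define $$K(s,a\,\|\,x,b;\xi_{1:n})=\sum_{k=1}^n\Big[a(s,\xi_k)\ln\frac{a(s,\xi_k)}{b(x,\xi_k)}+(1-a(s,\xi_k))\ln\frac{1-a(s,\xi_k)}{1-b(x,\xi_k)}\Big].$$ Let $c_i,c_j\in\mathbb{R}^q$ satisfy $\hat\ell(c_j,\xi_k)\ge\hat\ell(c_i,\xi_k)$ for all $k\in\{1,\dots,n\}$. Then $$K(s,\ell\,\|\,c_j,\hat\ell;\xi_{1:n})<K(s,\ell\,\|\,c_i,\hat\ell;\xi_{1:n})\implies K(s,\hat\ell\,\|\,c_j,\hat\ell;\xi_{1:n})<K(s,\hat\ell\,\|\,c_i,\hat\ell;\xi_{1:n}).$$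
   Context: $\ell$ is the true detection-probability function and $\hat\ell$ an assumed envelope; $K(s,a\|x,b;\xi_{1:n})$ is the KL divergence between the joint distribution of independent Bernoulli measurements with parameters $a(s,\xi_k)$ and that with parameters $b(x,\xi_k)$. *)

(* Defs.v *)
From HB Require Import structures.
From mathcomp Require Import all_boot all_order all_algebra.
From mathcomp Require Import all_classical all_reals all_analysis.
Set Implicit Arguments. Unset Strict Implicit. Unset Printing Implicit Defensive.
Import Order.TTheory GRing.Theory Num.Theory.
Import numFieldNormedType.Exports.
Local Open Scope ring_scope.

(* K(s,a || x,b; xi_{1:n}) : KL divergence between independent Bernoulli
   measurements, summed over k = 1..n (indexed here by 'I_n). *)
Definition Kdiv (R : realType) (q n : nat)
  (s : 'rV[R]_q) (a : 'rV[R]_q * 'rV[R]_q -> R)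
  (x : 'rV[R]_q) (b : 'rV[R]_q * 'rV[R]_q -> R) (xi : 'I_n -> 'rV[R]_q) : R :=
  \sum_(k < n)
    (a (s, xi k) * ln (a (s, xi k) / b (x, xi k))
     + (1 - a (s, xi k)) * ln ((1 - a (s, xi k)) / (1 - b (x, xi k)))).

(* Main.v *)
Require Import Defs.
From HB Require Import structures.
From mathcomp Require Import all_boot all_order all_algebra.
From mathcomp Require Import all_classical all_reals all_analysis.
From mathcomp Require Import lra.
Import Order.TTheory GRing.Theory Num.Theory.
Import numFieldNormedType.Exports.
Local Open Scope ring_scope.

Lemma term_le (R : realType) (a a' bi bj : R) :
  0 < a < 1 -> 0 < a' < 1 -> 0 < bi < 1 -> 0 < bj < 1 -> a <= a' -> bi <= bj ->
  (a' * ln (a' / bj) + (1 - a') * ln ((1 - a') / (1 - bj))) -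
  (a' * ln (a' / bi) + (1 - a') * ln ((1 - a') / (1 - bi))) <=
  (a * ln (a / bj) + (1 - a) * ln ((1 - a) / (1 - bj))) -
  (a * ln (a / bi) + (1 - a) * ln ((1 - a) / (1 - bi))).
Proof.
move=> /andP[a0 a1] /andP[a'0 a'1] /andP[bi0 bi1] /andP[bj0 bj1] aa bb.
have P x : 0 < x -> x \in Num.pos by [] .
have Q x : x < 1 -> 1 - x \in Num.pos by move=> h; rewrite -topredE /= subr_gt0.
rewrite !ln_div ?P ?Q //.
have L1 : ln bi <= ln bj by rewrite ler_ln ?P.
have L2 : ln (1 - bj) <= ln (1 - bi) by rewrite ler_ln ?Q // lerB.
have H1 : 0 <= (a' - a) * (ln bj - ln bi) by apply: mulr_ge0; rewrite subr_ge0.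
have H2 : 0 <= (a' - a) * (ln (1 - bi) - ln (1 - bj)) by apply: mulr_ge0; rewrite subr_ge0.
set A := ln bj in H1 *; set B := ln bi in H1 *.
set C := ln (1 - bi) in H2 *; set D := ln (1 - bj) in H2 *.
lra.
all: by rewrite subr_gt0.

Qed.

Theorem lemma2 (R : realType) (q n : nat)
  (l lh : 'rV[R]_q * 'rV[R]_q -> R)
  (hl : forall x xi, 0 < l (x, xi) < 1)
  (hlh : forall x xi, 0 < lh (x, xi) < 1)
  (hcont : continuous lh)
  (hle : forall x xi, l (x, xi) <= lh (x, xi))
  (s : 'rV[R]_q) (xi : 'I_n -> 'rV[R]_q) (ci cj : 'rV[R]_q)
  (hij : forall k : 'I_n, lh (ci, xi k) <= lh (cj, xi k)) :
  Kdiv s l cj lh xi < Kdiv s l ci lh xi ->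
  Kdiv s lh cj lh xi < Kdiv s lh ci lh xi.
Proof.
move=> H; rewrite -subr_lt0; rewrite -subr_lt0 in H.
apply: le_lt_trans H; rewrite /Kdiv -!sumrB; apply: ler_sum => k _.
exact: term_le.
Qed.
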